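(* Call-by-name coupled logical bisimilarity coincides with the contextual equivalences: $(\approx^n_1,\approx^n_2)=(\simeq^n,\cong^n)$. Consequently, both components coincide with each other: $\approx^n_1=\simeq^n=\cong^n=\approx^n_2$.
   Context: $\Lambda^\bullet$ is the set of closed $\lambda$-terms. Contexts are generated by $C::=x\mid[\cdot]\mid C\,C\mid\lambda x.C$, possibly with several holes numbered left to right; $C[\widetilde M]$ fills the $i$-th hole with $M_i$; $C[M]$ fills every hole with $M$. For $\mathcal{R}\subseteq\Lambda^\bullet\times\Lambda^\bullet$, $\mathcal{R}^\star=\{(C[\widetilde M],C[\widetilde N]) : C\text{ a context},\ M_i\,\mathcal{R}\,N_i\ \forall i,\ C[\widetilde M],C[\widetilde N]\in\Lambda^\bullet\}$. Call-by-name reduction on closed terms: $MN\longrightarrow M'N$ if $M\longrightarrow M'$, and $(\lambda x.P)N\longrightarrow P[N/x]$; $\Longrightarrow$ is its reflexive transitive closure; values are closed abstractions; $M{\Downarrow}$ means $M\Longrightarrow V$ for some value $V$. Contextual equivalence: $M\simeq^n N$ iff for all contexts $C$ with $C[M],C[N]$ closed, $C[M]{\Downarrow}\iff C[N]{\Downarrow}$. Evaluation contexts $\mathcal{E}::=[\cdot]\mid\mathcal{E}\,M$ ($M\in\Lambda^\bullet$); $M\cong^n N$ iff for all evaluation contexts $\mathcal{E}$, $\mathcal{E}[M]{\Downarrow}\iff\mathcal{E}[N]{\Downarrow}$. A coupled relation is a pair $(\mathcal{R}_1,\mathcal{R}_2)$ of relations on $\Lambda^\bullet$ with $\mathcal{R}_1\subseteq\mathcal{R}_2$.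 It is a (call-by-name) coupled logical bisimulation if whenever $M\,\mathcal{R}_2\,N$: (1) if $M\longrightarrow M'$ then there is $N'$ with $N\Longrightarrow N'$ and $M'\,\mathcal{R}_2\,N'$; (2) if $M=\lambda x.M'$ then $N\Longrightarrow\lambda x.N'$ for some $N'$ and for all $P,Q\in\Lambda^\bullet$ with $P\,\mathcal{R}_1^\star\,Q$, $M'[P/x]\,\mathcal{R}_2\,N'[Q/x]$; (3) the converses of (1),(2) with $M$ and $N$ exchanged. Coupled logical bisimilarity $(\approx^n_1,\approx^n_2)$ is the componentwise union of all such bisimulations. *)

(* Defs.v *)
(* Pure lambda calculus in de Bruijn notation (alpha-equivalence
   is syntactic equality). *)
From Stdlib Require Import Arith List.
Import ListNotations.

Inductive term : Type :=
| Var : nat -> term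
| App : term -> term -> term
| Lam : term -> term.

Fixpoint closed_at (k : nat) (t : term) : Prop :=
  match t with
  | Var n => n < k
  | App t1 t2 => closed_at k t1 /\ closed_at k t2
  | Lam t1 => closed_at (S k) t1
  end.

Definition closed (t : term) : Prop := closed_at 0 t.

(* subst k N t : replaces index k of t by the CLOSED term N (no lifting needed),
   decrementing the indices above k.  t[N/x] for the bound variable of a lambda
   is  subst 0 N body. *)
Fixpoint subst (k : nat) (N : term) (t : term) : term :=
  match t with
  | Var n => if Nat.eqb n k then N else if Nat.ltb k n then Var (pred n) else Var n
  | App t1 t2 => App (subst k N t1) (subst k N t2)
  | Lam t1 => Lam (subst (S k) N t1)
  end.

Inductive step : term -> term -> Prop :=
| step_app : forall M M' N, closed (App M N) -> step M M' -> step (App M N) (App M' N)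
| step_beta : forall P N, closed (App (Lam P) N) -> step (App (Lam P) N) (subst 0 N P).

Inductive steps : term -> term -> Prop :=
| steps_refl : forall M, steps M M
| steps_step : forall M M' M'', step M M' -> steps M' M'' -> steps M M''.

Definition is_value (V : term) : Prop := closed V /\ exists P, V = Lam P.

Definition converges (M : term) : Prop := exists V, steps M V /\ is_value V.

(* Contexts with possibly several holes, numbered left to right. *)
Inductive ctx : Type :=
| CVar : nat -> ctx
| CHole : ctx
| CApp : ctx -> ctx -> ctx
| CLam : ctx -> ctx.

Fixpoint nholes (C : ctx) : nat :=
  match C with
  | CVar _ => 0
  | CHole => 1
  | CApp C1 C2 => nholes C1 + nholes C2
  | CLam C1 => nholes C1
  end.

Fixpoint fill (C : ctx) (f : nat -> term) : term :=
  match C with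
  | CVar n => Var n
  | CHole => f 0
  | CApp C1 C2 => App (fill C1 f) (fill C2 (fun i => f (nholes C1 + i)))
  | CLam C1 => Lam (fill C1 f)
  end.

Definition rel := term -> term -> Prop.

Definition ctx_closure (R : rel) : rel :=
  fun A B => exists (C : ctx) (Ms Ns : nat -> term),
    (forall i, i < nholes C -> R (Ms i) (Ns i)) /\
    closed (fill C Ms) /\ closed (fill C Ns) /\
    A = fill C Ms /\ B = fill C Ns.

Definition ctx_equiv : rel :=
  fun M N => closed M /\ closed N /\
    forall C : ctx, closed (fill C (fun _ => M)) -> closed (fill C (fun _ => N)) ->
      (converges (fill C (fun _ => M)) <-> converges (fill C (fun _ => N))).

(* evaluation contexts  [.] M1 ... Mk  with closed Mi *)
Definition apps (M : term) (l : list term) : term := fold_left App l M.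

Definition eval_equiv : rel :=
  fun M N => closed M /\ closed N /\
    forall l : list term, Forall closed l ->
      (converges (apps M l) <-> converges (apps N l)).

Definition rel_on_closed (R : rel) : Prop := forall M N, R M N -> closed M /\ closed N.

Definition bisim_clauses (R1 R2 : rel) (M N : term) : Prop :=
  (forall M', step M M' -> exists N', steps N N' /\ R2 M' N') /\
  (forall M', M = Lam M' -> exists N', steps N (Lam N') /\
      forall P Q, closed P -> closed Q -> ctx_closure R1 P Q ->
        R2 (subst 0 P M') (subst 0 Q N')).

Definition coupled_logical_bisim (R1 R2 : rel) : Prop :=
  rel_on_closed R1 /\ rel_on_closed R2 /\
  (forall M N, R1 M N -> R2 M N) /\
  (forall M N, R2 M N -> bisim_clauses R1 R2 M N /\ bisim_clauses (fun a b => R1 b a) (fun a b => R2 b a) N M).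

Definition bisim1 : rel := fun M N => exists R1 R2, coupled_logical_bisim R1 R2 /\ R1 M N.
Definition bisim2 : rel := fun M N => exists R1 R2, coupled_logical_bisim R1 R2 /\ R2 M N.

(* Main.v *)
Require Import Defs.
From Stdlib Require Import Arith List Lia.
Import ListNotations.

Lemma closed_at_mono : forall t k m, closed_at k t -> k <= m -> closed_at m t.
Proof.
  induction t; simpl; intros k m H Hle.
  - lia.
  - destruct H; split; [eapply IHt1|eapply IHt2]; eauto.
  - eapply IHt; eauto; lia.
Qed.

Lemma subst_closed_id : forall t k N, closed_at k t -> subst k N t = t.
Proof.
  induction t; simpl; intros k N H.
  - destruct (Nat.eqb_spec n k); [lia|]. destruct (Nat.ltb_spec k n); [lia|]. reflexivity.
  - destruct H; rewrite IHt1, IHt2; auto.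
  - rewrite IHt; auto.
Qed.

Lemma closed_subst : forall t k m N, closed_at (S m) t -> k <= m -> closed N -> closed_at m (subst k N t).
Proof.
  induction t; simpl; intros k m N H Hle HN.
  - destruct (Nat.eqb_spec n k).
    + eapply closed_at_mono; eauto; lia.
    + destruct (Nat.ltb_spec k n); simpl; lia.
  - destruct H; split; eauto.
  - apply IHt; auto; lia.
Qed.

Lemma closed_subst0 : forall t N, closed_at 1 t -> closed N -> closed (subst 0 N t).
Proof. intros; unfold closed; apply closed_subst; auto. Qed.

Lemma step_closed : forall M M', step M M' -> closed M /\ closed M'.
Proof.
  induction 1; unfold closed in *; simpl in *.
  - destruct H; destruct IHstep; auto.
  - destruct H; split; auto. apply closed_subst0; auto.
Qed.

Lemma steps_closed : forall M M', steps M M' -> closed M -> closed M'.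
Proof. induction 1; auto. intros; apply IHsteps. apply (step_closed _ _ H). Qed.

Lemma lam_nostep : forall P M, ~ step (Lam P) M.
Proof. intros P M H; inversion H. Qed.

Lemma step_det : forall M M1, step M M1 -> forall M2, step M M2 -> M1 = M2.
Proof.
  induction 1; intros M2 H2; inversion H2; subst.
  - f_equal; auto.
  - exfalso; eapply lam_nostep; eauto.
  - exfalso; eapply lam_nostep; eauto.
  - reflexivity.
Qed.

Lemma steps_trans : forall a b c, steps a b -> steps b c -> steps a c.
Proof. induction 1; intros; auto. econstructor; eauto. Qed.

Lemma converges_steps : forall X X', steps X X' -> converges X -> converges X'.
Proof.
  intros X X' Hs [V [HV Hv]]. exists V; split; auto.
  revert X' Hs. induction HV; intros X' Hs.
  - inversion Hs; subst; auto. destruct Hv as [_ [P ->]]. exfalso; eapply lam_nostep; eauto.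
  - inversion Hs; subst.
    + econstructor; eauto.
    + rewrite (step_det _ _ H _ H0) in *. auto.
Qed.

Lemma steps_conv : forall X X', steps X X' -> converges X' -> converges X.
Proof. intros X X' Hs [V [HV Hv]]. exists V; split; auto. eapply steps_trans; eauto. Qed.

Lemma progress : forall M, closed M -> (exists P, M = Lam P) \/ exists M', step M M'.
Proof.
  induction M; unfold closed; simpl; intros H.
  - lia.
  - destruct H as [H1 H2]. right. destruct (IHM1 H1) as [[P ->]|[M' HM]].
    + eexists; apply step_beta. unfold closed; simpl; auto.
    + eexists; apply step_app; eauto. unfold closed; simpl; auto.
  - left; eauto.
Qed.

Lemma apps_app : forall A B M, apps M (A ++ B) = apps (apps M A) B.
Proof. intros; unfold apps; rewrite fold_left_app; reflexivity. Qed.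

Lemma apps_snoc : forall A b M, apps M (A ++ [b]) = App (apps M A) b.
Proof. intros; rewrite apps_app; reflexivity. Qed.

Lemma closed_apps : forall A M, closed (apps M A) <-> closed M /\ Forall closed A.
Proof.
  induction A; simpl; intros M.
  - split; auto. intros [H _]; auto.
  - change (apps M (a :: A)) with (apps (App M a) A). rewrite IHA.
    unfold closed; simpl. split.
    + intros [[H1 H2] H3]; auto.
    + intros [H1 H2]; inversion H2; auto.
Qed.

Lemma step_apps : forall A M M', step M M' -> Forall closed A -> step (apps M A) (apps M' A).
Proof.
  induction A; simpl; intros M M' H HA; auto.
  inversion HA; subst. apply IHA; auto. apply step_app; auto.
  unfold closed; simpl; split; auto. apply (step_closed _ _ H).
Qed.

Lemma steps_apps : forall A M M', steps M M' -> Forall closed A -> steps (apps M A) (apps M' A).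
Proof.
  induction 1; intros HA. constructor. econstructor. apply step_apps; eauto. auto.
Qed.

Lemma step_beta_apps : forall A H a, closed (apps (Lam H) (a :: A)) ->
  step (apps (Lam H) (a :: A)) (apps (subst 0 a H) A).
Proof.
  intros A H a Hc. apply closed_apps in Hc. destruct Hc as [H1 H2]. inversion H2; subst.
  change (apps (Lam H) (a :: A)) with (apps (App (Lam H) a) A).
  apply step_apps; auto. apply step_beta. unfold closed in *; simpl; auto.
Qed.

Inductive Rc (R : rel) : term -> term -> Prop :=
| rc_var : forall n, Rc R (Var n) (Var n)
| rc_app : forall a b c d, Rc R a c -> Rc R b d -> Rc R (App a b) (App c d)
| rc_lam : forall a c, Rc R a c -> Rc R (Lam a) (Lam c)
| rc_base : forall M N, R M N -> Rc R M N.

Lemma Rc_refl : forall R t, Rc R t t.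
Proof. induction t; constructor; auto. Qed.

Lemma Forall2_refl_Rc : forall R l, Forall2 (Rc R) l l.
Proof. induction l; constructor; auto using Rc_refl. Qed.

Lemma Rc_flip : forall R a b, Rc R a b -> Rc (fun x y => R y x) b a.
Proof. induction 1; constructor; auto. Qed.

Lemma Rc_mono : forall (R R' : rel), (forall x y, R x y -> R' x y) -> forall a b, Rc R a b -> Rc R' a b.
Proof. induction 2; constructor; auto. Qed.

Lemma Rc_apps : forall R A B, Forall2 (Rc R) A B -> forall M N, Rc R M N -> Rc R (apps M A) (apps N B).
Proof. induction 1; simpl; intros; auto. apply IHForall2. constructor; auto. Qed.

Lemma Rc_subst : forall R, (forall M N, R M N -> closed M /\ closed N) ->
  forall a c, Rc R a c -> forall k P Q, Rc R P Q -> closed P -> closed Q ->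
  Rc R (subst k P a) (subst k Q c).
Proof.
  intros R HR. induction 1; simpl; intros k P Q HPQ cP cQ.
  - destruct (Nat.eqb n k); auto. destruct (Nat.ltb k n); constructor.
  - constructor; auto.
  - constructor; auto.
  - destruct (HR _ _ H) as [c1 c2]. rewrite !subst_closed_id.
    + constructor; auto.
    + eapply closed_at_mono; eauto; lia.
    + eapply closed_at_mono; eauto; lia.
Qed.

Lemma Rc_decomp : forall R X Y, Rc R X Y ->
 (exists M N A B, R M N /\ Forall2 (Rc R) A B /\ X = apps M A /\ Y = apps N B) \/
 (exists H H' A B, Rc R H H' /\ Forall2 (Rc R) A B /\ X = apps (Lam H) A /\ Y = apps (Lam H') B) \/
 (exists n A B, X = apps (Var n) A /\ Y = apps (Var n) B).
Proof.
  induction 1.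
  - right; right. exists n, [], []; auto.
  - destruct IHRc1 as [[M [N [A [B [h1 [h2 [-> ->]]]]]]]|[[H1 [H2 [A [B [h1 [h2 [-> ->]]]]]]]|[n [A [B [-> ->]]]]]].
    + left. exists M, N, (A ++ [b]), (B ++ [d]). rewrite !apps_snoc. split; auto. split; auto.
      apply Forall2_app; auto.
    + right; left. exists H1, H2, (A ++ [b]), (B ++ [d]). rewrite !apps_snoc. split; auto. split; auto.
      apply Forall2_app; auto.
    + right; right. exists n, (A ++ [b]), (B ++ [d]). rewrite !apps_snoc. auto.
  - right; left. exists a, c, [], []. auto.
  - left. exists M, N, [], []. auto.
Qed.

Lemma closed_apps_var : forall n A, ~ closed (apps (Var n) A).
Proof. intros n A H. apply closed_apps in H. destruct H as [H _]. unfold closed in H; simpl in H; lia. Qed.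

Lemma spine : forall t, exists h A, t = apps h A /\ (forall u v, h <> App u v).
Proof.
  induction t.
  - exists (Var n), []; split; auto; discriminate.
  - destruct IHt1 as [h [A [-> Hh]]]. exists h, (A ++ [t2]). rewrite apps_snoc; auto.
  - exists (Lam t), []; split; auto; discriminate.
Qed.

Lemma spine_closed : forall t, closed t -> exists H A, t = apps (Lam H) A.
Proof.
  intros t Ht. destruct (spine t) as [h [A [-> Hh]]]. destruct h.
  - exfalso; eapply closed_apps_var; eauto.
  - exfalso; eapply Hh; eauto.
  - eauto.
Qed.

Lemma fill_ext : forall C f g, (forall i, i < nholes C -> f i = g i) -> fill C f = fill C g.
Proof.
  induction C; simpl; intros f g H.
  - reflexivity.
  - apply H; lia.
  - f_equal; [apply IHC1|apply IHC2]; intros; apply H; lia.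
  - f_equal; auto.
Qed.

Lemma fill_Rc : forall R C Ms Ns, (forall i, i < nholes C -> R (Ms i) (Ns i)) -> Rc R (fill C Ms) (fill C Ns).
Proof.
  induction C; simpl; intros Ms Ns H.
  - constructor.
  - constructor; apply H; lia.
  - constructor; [apply IHC1 | apply IHC2]; intros; apply H; lia.
  - constructor; apply IHC; auto.
Qed.

Lemma Rc_fill : forall R P Q, Rc R P Q -> exists C Ms Ns,
  (forall i, i < nholes C -> R (Ms i) (Ns i)) /\ P = fill C Ms /\ Q = fill C Ns.
Proof.
  induction 1.
  - exists (CVar n), (fun _ => Var 0), (fun _ => Var 0). simpl; split; auto; intros; lia.
  - destruct IHRc1 as [C1 [M1 [N1 [h1 [-> ->]]]]].
    destruct IHRc2 as [C2 [M2 [N2 [h2 [-> ->]]]]].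
    exists (CApp C1 C2), (fun i => if i <? nholes C1 then M1 i else M2 (i - nholes C1)),
      (fun i => if i <? nholes C1 then N1 i else N2 (i - nholes C1)).
    simpl. split; [|split].
    + intros i Hi. destruct (Nat.ltb_spec i (nholes C1)); auto. apply h2; lia.
    + f_equal; apply fill_ext; intros i Hi.
      * destruct (Nat.ltb_spec i (nholes C1)); auto; lia.
      * destruct (Nat.ltb_spec (nholes C1 + i) (nholes C1)); [lia|]. f_equal; lia.
    + f_equal; apply fill_ext; intros i Hi.
      * destruct (Nat.ltb_spec i (nholes C1)); auto; lia.
      * destruct (Nat.ltb_spec (nholes C1 + i) (nholes C1)); [lia|]. f_equal; lia.
  - destruct IHRc as [C1 [M1 [N1 [h1 [-> ->]]]]]. exists (CLam C1), M1, N1. simpl; auto.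
  - exists CHole, (fun _ => M), (fun _ => N). simpl; split; auto.
Qed.

Lemma ctx_closure_Rc : forall R P Q, ctx_closure R P Q -> Rc R P Q.
Proof. intros R P Q [C [Ms [Ns [H [_ [_ [-> ->]]]]]]]. apply fill_Rc; auto. Qed.

Lemma Rc_ctx_closure : forall R P Q, Rc R P Q -> closed P -> closed Q -> ctx_closure R P Q.
Proof.
  intros R P Q H cP cQ. destruct (Rc_fill _ _ _ H) as [C [Ms [Ns [h [-> ->]]]]].
  exists C, Ms, Ns; auto.
Qed.

Definition HRprop (R : rel) : Prop := forall M N, R M N -> closed M /\ closed N /\
  forall B, Forall closed B -> converges (apps M B) -> converges (apps N B).

Definition Qc (R : rel) (X : term) : Prop :=
  forall Y, Rc R X Y -> closed X -> closed Y -> converges Y.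

Lemma lam_converges : forall H, closed (Lam H) -> converges (Lam H).
Proof. intros H c. exists (Lam H); split; [constructor|split; eauto]. Qed.

Lemma CL_S : forall R, HRprop R -> forall X, (forall X1, step X X1 -> Qc R X1) ->
  forall H H' A B, X = apps (Lam H) A -> Forall2 (Rc R) A B -> Rc R H H' ->
  closed X -> closed (apps (Lam H') B) -> converges (apps (Lam H') B).
Proof.
  intros R HR X IH H H' A B -> HAB HH cX cY.
  destruct HAB as [|a b A B hab HAB].
  - apply lam_converges; auto.
  - pose proof (step_beta_apps _ _ _ cX) as s1.
    pose proof (step_beta_apps _ _ _ cY) as s2.
    apply closed_apps in cX as [cX1 cX2]. apply closed_apps in cY as [cY1 cY2].
    inversion cX2; inversion cY2; subst.
    eapply steps_conv; [econstructor; [apply s2|constructor]|].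
    apply (IH _ s1).
    + apply Rc_apps; auto. apply Rc_subst; auto.
      intros M N h; destruct (HR _ _ h) as [? [? _]]; auto.
    + apply (step_closed _ _ s1).
    + apply (step_closed _ _ s2).
Qed.

Lemma CL_Q : forall R, HRprop R -> forall X, (forall X1, step X X1 -> Qc R X1) -> Qc R X.
Proof.
  intros R HR X IH Y HXY cX cY.
  destruct (Rc_decomp _ _ _ HXY) as [[M [N [A [B [h1 [h2 [-> ->]]]]]]]|[[H1 [H2 [A [B [h1 [h2 [-> ->]]]]]]]|[n [A [B [-> ->]]]]]].
  - destruct (HR _ _ h1) as [cM [cN HMN]].
    apply closed_apps in cY as [_ cB]. apply HMN; auto.
    destruct (spine_closed _ cM) as [H [A0 ->]].
    rewrite <- apps_app. eapply CL_S; eauto.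
    + rewrite apps_app; reflexivity.
    + apply Forall2_app; auto. apply Forall2_refl_Rc.
    + apply Rc_refl.
    + rewrite apps_app. apply closed_apps; auto.
  - eapply CL_S; eauto.
  - exfalso; eapply closed_apps_var; eauto.
Qed.

Lemma CL_main : forall R, HRprop R -> forall X V, steps X V -> is_value V -> Qc R X.
Proof.
  intros R HR X V Hs Hv. induction Hs.
  - apply CL_Q; auto. intros X1 Hs. destruct Hv as [_ [P ->]]. exfalso; eapply lam_nostep; eauto.
  - apply CL_Q; auto. intros X1 Hs'. rewrite <- (step_det _ _ H _ Hs'). auto.
Qed.

Lemma CL : forall R, HRprop R -> forall X Y, Rc R X Y -> closed X -> closed Y -> converges X -> converges Y.
Proof. intros R HR X Y H cX cY [V [Hs Hv]]. eapply CL_main; eauto. Qed.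

Lemma EV_sym : forall M N, eval_equiv M N -> eval_equiv N M.
Proof. intros M N [a [b c]]; split; auto; split; auto; intros; symmetry; auto. Qed.

Lemma EV_trans : forall M N P, eval_equiv M N -> eval_equiv N P -> eval_equiv M P.
Proof.
  intros M N P [a [b c]] [d [e f]]; split; auto; split; auto; intros l Hl.
  rewrite c; auto.
Qed.

Lemma EV_HR : HRprop eval_equiv.
Proof. intros M N [a [b c]]; split; auto; split; auto; intros B HB; apply c; auto. Qed.

Lemma EV_HR_flip : HRprop (fun x y => eval_equiv y x).
Proof. intros M N [a [b c]]; split; auto; split; auto; intros B HB; apply c; auto. Qed.

Lemma Rc_EV : forall X Y, Rc eval_equiv X Y -> closed X -> closed Y -> eval_equiv X Y.
Proof.
  intros X Y H cX cY. split; auto; split; auto. intros l Hl.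
  assert (Hr : Rc eval_equiv (apps X l) (apps Y l)) by (apply Rc_apps; auto; apply Forall2_refl_Rc).
  assert (c1 : closed (apps X l)) by (apply closed_apps; auto).
  assert (c2 : closed (apps Y l)) by (apply closed_apps; auto).
  split; intro Hc.
  - eapply CL; [apply EV_HR|..]; eauto.
  - eapply CL; [apply EV_HR_flip|apply Rc_flip; exact Hr|..]; eauto.
Qed.

Lemma EV_steps : forall X X', steps X X' -> closed X -> eval_equiv X X'.
Proof.
  intros X X' Hs cX. split; auto; split; [eapply steps_closed; eauto|]. intros l Hl.
  assert (Hs' := steps_apps _ _ _ Hs Hl). split; intro H.
  - eapply converges_steps; eauto.
  - eapply steps_conv; eauto.
Qed.

Definition prog (R1 R2 : rel) : Prop :=
  rel_on_closed R2 /\ (forall M N, R1 M N -> R2 M N) /\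
  (forall M N, R2 M N -> bisim_clauses R1 R2 M N).

Definition T (R1 R2 : rel) (X Y : term) : Prop := closed X /\ closed Y /\
  ((exists M N A B, R2 M N /\ Forall2 (Rc R1) A B /\ X = apps M A /\ Y = apps N B) \/
   (exists H H' A B, Rc R1 H H' /\ Forall2 (Rc R1) A B /\ X = apps (Lam H) A /\ Y = apps (Lam H') B)).

Lemma prog_R1_closed : forall R1 R2, prog R1 R2 -> forall M N, R1 M N -> closed M /\ closed N.
Proof. intros R1 R2 [a [b c]] M N H. apply a, b, H. Qed.

Lemma Rc_T : forall R1 R2, prog R1 R2 -> forall X Y, Rc R1 X Y -> closed X -> closed Y -> T R1 R2 X Y.
Proof.
  intros R1 R2 Hp X Y H cX cY. split; auto; split; auto.
  destruct (Rc_decomp _ _ _ H) as [[M [N [A [B [h1 [h2 [-> ->]]]]]]]|[h|[n [A [B [-> ->]]]]]].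
  - left. exists M, N, A, B. destruct Hp as [_ [b _]]. auto.
  - right; auto.
  - exfalso; eapply closed_apps_var; eauto.
Qed.

Definition QT (R1 R2 : rel) (X : term) : Prop := forall Y, T R1 R2 X Y -> converges Y.

Lemma QT_step : forall R1 R2, prog R1 R2 -> forall X, (forall X1, step X X1 -> QT R1 R2 X1) -> QT R1 R2 X.
Proof.
  intros R1 R2 Hp X IH Y [cX [cY [c1|c2]]].
  - destruct c1 as [M [N [A [B [h1 [h2 [-> ->]]]]]]].
    pose proof Hp as [Hcl [Hsub Hcl2]].
    destruct (Hcl2 _ _ h1) as [cl1 cl2].
    destruct (Hcl _ _ h1) as [cM cN].
    pose proof cX as cX'. pose proof cY as cY'.
    apply closed_apps in cX' as [_ cA]. apply closed_apps in cY' as [_ cB].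
    destruct (progress M cM) as [[M' ->]|[M' sM]].
    + destruct (cl2 M' eq_refl) as [N' [sN Hsub']].
      assert (cN' : closed (Lam N')) by (eapply steps_closed; eauto).
      destruct h2 as [|a b A B hab h2].
      * simpl. eapply steps_conv; eauto. apply lam_converges; auto.
      * inversion cA; inversion cB; subst.
        pose proof (step_beta_apps _ _ _ cX) as s1.
        assert (s2 : steps (apps N (b :: B)) (apps (subst 0 b N') B)).
        { eapply steps_trans. apply steps_apps; eauto.
          econstructor; [|constructor]. apply step_beta_apps.
          apply closed_apps; split; auto. }
        eapply steps_conv; eauto. apply (IH _ s1).
        split; [apply (step_closed _ _ s1)|]. split; [eapply steps_closed; eauto|].
        left. exists (subst 0 a M'), (subst 0 b N'), A, B. split; auto.
        apply Hsub'; auto. apply Rc_ctx_closure; auto.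
    + destruct (cl1 M' sM) as [N' [sN h']].
      assert (s1 : step (apps M A) (apps M' A)) by (apply step_apps; auto).
      assert (s2 : steps (apps N B) (apps N' B)) by (apply steps_apps; auto).
      eapply steps_conv; eauto. apply (IH _ s1).
      split; [apply (step_closed _ _ s1)|]. split; [eapply steps_closed; eauto|].
      left. exists M', N', A, B. auto.
  - destruct c2 as [H [H' [A [B [h1 [h2 [-> ->]]]]]]].
    destruct h2 as [|a b A B hab h2].
    + apply lam_converges; auto.
    + pose proof (step_beta_apps _ _ _ cX) as s1.
      pose proof (step_beta_apps _ _ _ cY) as s2.
      pose proof cX as cX'. pose proof cY as cY'.
      apply closed_apps in cX' as [_ cA]. apply closed_apps in cY' as [_ cB].
      inversion cA; inversion cB; subst.
      eapply steps_conv; [econstructor; [apply s2|constructor]|].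
      apply (IH _ s1). apply Rc_T; auto.
      * apply Rc_apps; auto. apply Rc_subst; auto. eapply prog_R1_closed; eauto.
      * apply (step_closed _ _ s1).
      * apply (step_closed _ _ s2).
Qed.

Lemma QT_main : forall R1 R2, prog R1 R2 -> forall X V, steps X V -> is_value V -> QT R1 R2 X.
Proof.
  intros R1 R2 HR X V Hs Hv. induction Hs.
  - apply QT_step; auto. intros X1 Hs. destruct Hv as [_ [P ->]]. exfalso; eapply lam_nostep; eauto.
  - apply QT_step; auto. intros X1 Hs'. rewrite <- (step_det _ _ H _ Hs'). auto.
Qed.

Lemma prog_sound : forall R1 R2, prog R1 R2 -> forall M N, R2 M N -> forall l, Forall closed l ->
  converges (apps M l) -> converges (apps N l).
Proof.
  intros R1 R2 Hp M N H l Hl [V [Hs Hv]].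
  destruct (proj1 Hp _ _ H) as [cM cN].
  apply (QT_main R1 R2 Hp _ V Hs Hv). split; [apply closed_apps; auto|]. split; [apply closed_apps; auto|].
  left. exists M, N, l, l. split; auto. split; auto. apply Forall2_refl_Rc.
Qed.

Lemma CLB_sound : forall R1 R2, coupled_logical_bisim R1 R2 -> forall M N, R2 M N -> eval_equiv M N.
Proof.
  intros R1 R2 [c1 [c2 [c3 c4]]] M N H.
  assert (p1 : prog R1 R2).
  { split; auto; split; auto. intros; apply c4; auto. }
  assert (p2 : prog (fun a b => R1 b a) (fun a b => R2 b a)).
  { split; [intros a b h; destruct (c2 _ _ h); auto|]. split; auto. intros; apply c4; auto. }
  destruct (c2 _ _ H) as [cM cN]. split; auto; split; auto. intros l Hl; split.
  - intros; eapply (prog_sound _ _ p1); eauto.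
  - eapply (prog_sound _ _ p2); eauto.
Qed.

Fixpoint ctx_of_term (t : term) : ctx :=
  match t with
  | Var n => CVar n
  | App a b => CApp (ctx_of_term a) (ctx_of_term b)
  | Lam a => CLam (ctx_of_term a)
  end.

Lemma fill_ctx_of_term : forall t f, fill (ctx_of_term t) f = t.
Proof. induction t; simpl; intros; f_equal; auto. Qed.

Lemma fill_actx : forall l C M,
  fill (fold_left (fun C a => CApp C (ctx_of_term a)) l C) (fun _ => M) = apps (fill C (fun _ => M)) l.
Proof.
  induction l; simpl; intros; auto. rewrite IHl. simpl. rewrite fill_ctx_of_term. reflexivity.
Qed.

Lemma E_to_EV : forall M N, ctx_equiv M N -> eval_equiv M N.
Proof.
  intros M N [cM [cN H]]. split; auto; split; auto. intros l Hl.
  pose proof (H (fold_left (fun C a => CApp C (ctx_of_term a)) l CHole)) as H'.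
  rewrite !fill_actx in H'. simpl in H'. apply H'; apply closed_apps; auto.
Qed.

Lemma EV_to_E : forall M N, eval_equiv M N -> ctx_equiv M N.
Proof.
  intros M N HMN. pose proof HMN as [cM [cN _]]. split; auto; split; auto. intros C c1 c2.
  assert (h : eval_equiv (fill C (fun _ => M)) (fill C (fun _ => N))).
  { apply Rc_EV; auto. apply fill_Rc; auto. }
  destruct h as [_ [_ h]]. apply (h []). constructor.
Qed.

Lemma ctx_closure_mono : forall (R R' : rel), (forall a b, R a b -> R' a b) ->
  forall P Q, ctx_closure R P Q -> ctx_closure R' P Q.
Proof. intros R R' H P Q [C [Ms [Ns [h rest]]]]. exists C, Ms, Ns; auto. Qed.

Lemma EV_clauses : forall M N, eval_equiv M N -> bisim_clauses eval_equiv eval_equiv M N.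
Proof.
  intros M N HMN. pose proof HMN as [cM [cN HH]]. split.
  - intros M' Hs. exists N; split; [constructor|].
    apply EV_trans with M; auto. apply EV_sym. apply EV_steps; auto. econstructor; eauto. constructor.
  - intros M' ->. assert (Hc : converges N).
    { apply (HH []); [constructor|]. apply lam_converges; auto. }
    destruct Hc as [V [Hs [cV [N' ->]]]]. exists N'. split; auto.
    intros P Q cP cQ Hcc. apply ctx_closure_Rc in Hcc.
    unfold closed in cM, cV; simpl in cM, cV.
    assert (c1 : closed (App (Lam M') P)) by (unfold closed; simpl; auto).
    assert (c2 : closed (App N Q)) by (unfold closed; simpl; auto).
    assert (h1 : eval_equiv (App (Lam M') P) (App N Q)).
    { apply Rc_EV; auto. constructor; auto. constructor; auto. }
    apply EV_trans with (App (Lam M') P).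
    + apply EV_sym. apply EV_steps; auto. econstructor; [apply step_beta; auto|constructor].
    + apply EV_trans with (App N Q); auto. apply EV_steps; auto.
      eapply steps_trans. apply (steps_apps [Q] N (Lam N')); auto.
      econstructor; [|constructor]. apply step_beta. unfold closed; simpl; auto.
Qed.

Lemma CLB_EV : coupled_logical_bisim eval_equiv eval_equiv.
Proof.
  split; [intros M N [a [b _]]; auto|]. split; [intros M N [a [b _]]; auto|]. split; auto.
  intros M N H. split; [apply EV_clauses; auto|].
  destruct (EV_clauses N M (EV_sym _ _ H)) as [h1 h2]. split.
  - intros M' Hs. destruct (h1 M' Hs) as [N' [s h]]. exists N'; split; auto. apply EV_sym; auto.
  - intros M' e. destruct (h2 M' e) as [N' [s h]]. exists N'; split; auto.
    intros P Q cP cQ Hc. apply EV_sym. apply h; auto.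
    apply ctx_closure_mono with (R := fun a b => eval_equiv b a); auto. intros a b; apply EV_sym.
Qed.

Theorem mainTheorem8 :
  (forall M N, bisim1 M N <-> ctx_equiv M N) /\
  (forall M N, bisim2 M N <-> eval_equiv M N) /\
  (forall M N, ctx_equiv M N <-> eval_equiv M N).
Proof.
  split; [|split].
  - intros M N; split.
    + intros [R1 [R2 [Hc H]]]. apply EV_to_E. eapply CLB_sound; eauto.
      destruct Hc as [_ [_ [h _]]]; auto.
    + intros H. exists eval_equiv, eval_equiv. split; [apply CLB_EV|apply E_to_EV; auto].
  - intros M N; split.
    + intros [R1 [R2 [Hc H]]]. eapply CLB_sound; eauto.
    + intros H. exists eval_equiv, eval_equiv. split; [apply CLB_EV|auto].
  - intros M N; split; [apply E_to_EV|apply EV_to_E].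
Qed.
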